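(* Fix $\alpha\in(0,1]$, $\beta\in[1,\infty)$ and integers $m,n\ge2$. Suppose there is an $\alpha$-envy-free mechanism for the job scheduling problem over the normalized instances $\mathcal{N}$ with $m+1$ machines and $n+1$ jobs whose allocation function gives a $\beta$-approximation to the optimal makespan. Then there is an $\alpha$-envy-free mechanism for the job scheduling problem over the general instances $\mathcal{C}$ with $m$ machines and $n$ jobs whose allocation function gives a $\beta$-approximation to the optimal makespan.
   Context: For $m'$ machines and $n'$ jobs: an instance is $c\in\mathbb{R}_{\ge0}^{m'\times n'}$, $c_i(S)=\sum_{j\in S}c_{i,j}$. General instances $\mathcal{C}=\mathbb{R}_{\ge0}^{m'\times n'}$; normalized instances $\mathcal{N}=\{c\in\mathcal{C}:\exists C,\ c_i([n'])=C\ \forall i\}$. An allocation is a tuple of pairwise disjoint subsets of $[n']$ with union $[n']$. A mechanism $(A,p)$ over $\mathcal{I}$ assigns to each $c$ an allocation $A(c)$ and payments $p(c)\in\mathbb{R}^{m'}$ (written $A_i,p_i$). It is $\alpha$-envy-free ($\alpha\in(0,1]$) if for every $c\in\mathcal{I}$ and all machines $i,j$: $\alpha\, c_i(A_i)-p_i\le c_i(A_j)-p_j$. $\mathrm{OPT}(c)=\min_X\max_i c_i(X_i)$ over allocations $X$; $A$ gives a $\beta$-approximation if $\max_i c_i(A(c)_i)\le\beta\,\mathrm{OPT}(c)$ for all $c\in\mathcal{I}$. *)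

(* Defs.v *)
From mathcomp Require Import all_boot all_order all_algebra.
From mathcomp Require Import reals.
Set Implicit Arguments. Unset Strict Implicit. Unset Printing Implicit Defensive.
Import Order.TTheory GRing.Theory Num.Theory.
Local Open Scope ring_scope.

Section Sched.
Variables (R : realType) (m n : nat).

Definition instance := 'M[R]_(m, n).

Definition cost (c : instance) (i : 'I_m) (S : {set 'I_n}) : R :=
  \sum_(j in S) c i j.

Definition general (c : instance) : Prop := forall i j, 0 <= c i j.

Definition normalized (c : instance) : Prop :=
  general c /\ exists C : R, forall i, cost c i setT = C.

Definition allocation := {ffun 'I_m -> {set 'I_n}}.

Definition is_allocation (X : allocation) : bool :=
  [forall i : 'I_m, forall k : 'I_m, (i != k) ==> [disjoint X i & X k]] &&
  (\bigcup_(i < m) X i == setT).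

(* max_i c_i(X_i) (costs are nonnegative on the instances considered) *)
Definition makespan (c : instance) (X : allocation) : R :=
  \big[Num.max/0]_(i < m) cost c i (X i).

(* OPT(c) = min over allocations X of makespan; the default value (total cost
   of all entries) is never below the makespan of any allocation for
   nonnegative c, and allocations exist when m >= 1, so this is the minimum. *)
Definition OPT (c : instance) : R :=
  \big[Num.min/(\sum_(i < m) \sum_(j < n) c i j)]_(X : allocation | is_allocation X)
     makespan c X.

Definition alloc_fun := instance -> allocation.
Definition pay_fun := instance -> 'I_m -> R.

Definition is_mechanism (I : instance -> Prop) (A : alloc_fun) : Prop :=
  forall c, I c -> is_allocation (A c).

Definition envy_free (alpha : R) (I : instance -> Prop) (A : alloc_fun) (p : pay_fun) : Prop :=
  forall c, I c -> forall i k : 'I_m,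
    alpha * cost c i (A c i) - p c i <= cost c i (A c k) - p c k.

Definition beta_approx (beta : R) (I : instance -> Prop) (A : alloc_fun) : Prop :=
  forall c, I c -> makespan c (A c) <= beta * OPT c.

End Sched.

(* Main.v *)
Require Import Defs.
From mathcomp Require Import all_boot all_order all_algebra.
From mathcomp Require Import reals.
From mathcomp Require Import lra.
Import Order.TTheory GRing.Theory Num.Theory.
Local Open Scope ring_scope.

Section Helpers.
Context {R : realType} {m n : nat}.
Implicit Types (c : instance R m n) (X : allocation m n).

Lemma alloc_P X : is_allocation X <->
  (forall i k j, i != k -> j \in X i -> j \in X k -> False) /\
  (forall j, exists i, j \in X i).
Proof.
split.
- move=> /andP[/forallP H1 /eqP H2]; split.
  + move=> i k j ne ji jk.
    have /forallP/(_ k)/implyP/(_ ne) d := H1 i.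
    by rewrite (disjointFr d ji) in jk.
  + move=> j; have : j \in \bigcup_(i < m) X i by rewrite H2 inE.
    by case/bigcupP => i _ ji; exists i.
- case=> H1 H2; apply/andP; split.
  + apply/forallP => i; apply/forallP => k; apply/implyP => ne.
    rewrite -setI_eq0; apply/eqP/setP => j; rewrite !inE.
    by apply/negbTE/negP => /andP[a b]; exact: H1 ne a b.
  + apply/eqP/setP => j; rewrite inE; case: (H2 j) => i ji.
    by apply/bigcupP; exists i.
Qed.

Definition Ssum c := \sum_(i < m) \sum_(j < n) c i j.

Lemma cost_ge0 c i (S : {set 'I_n}) : general c -> 0 <= cost c i S.
Proof. by move=> g; apply: sumr_ge0 => j _; apply: g. Qed.

Lemma cost_le_row c i (S : {set 'I_n}) : general c -> cost c i S <= \sum_(j < n) c i j.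
Proof.
move=> g; rewrite /cost big_mkcond /=; apply: ler_sum => j _.
by case: ifP => _ //; apply: g.
Qed.

Lemma row_le_S c i : general c -> \sum_(j < n) c i j <= Ssum c.
Proof.
move=> g; rewrite /Ssum (bigD1 i) //= lerDl; apply: sumr_ge0 => k _.
by apply: sumr_ge0 => j _; apply: g.
Qed.

Lemma cost_ge_elem c i (S : {set 'I_n}) j : general c -> j \in S -> c i j <= cost c i S.
Proof.
move=> g jS; rewrite /cost (bigD1 j) //= lerDl.
by apply: sumr_ge0 => k _; apply: g.
Qed.

Lemma makespan_ge c X i : cost c i (X i) <= makespan c X.
Proof. exact: (@le_bigmax _ R _ 0 (fun i => cost c i (X i)) i). Qed.

Lemma makespan_le c X M : 0 <= M -> (forall i, cost c i (X i) <= M) ->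
  makespan c X <= M.
Proof. by move=> h0 h; apply: (@bigmax_le _ R _ _ (fun i => cost c i (X i))). Qed.

Lemma makespan_ge0 c X : 0 <= makespan c X.
Proof. by rewrite /makespan (@bigmax_idl _ R) le_max lexx. Qed.

Lemma OPT_le c X : is_allocation X -> OPT c <= makespan c X.
Proof. by move=> h; apply: (@bigmin_le_cond _ R _ _ X (fun X => is_allocation X) (fun X => makespan c X)). Qed.

Lemma OPT_le_S c : OPT c <= Ssum c.
Proof. exact: (@bigmin_le_id _ R). Qed.

Lemma OPT_ge0 c : general c -> 0 <= OPT c.
Proof.
move=> g; apply: (@le_bigmin _ R) => [|X _]; last exact: makespan_ge0.
by apply: sumr_ge0 => i _; apply: sumr_ge0 => j _; apply: g.
Qed.

End Helpers.

Lemma sum_lift (R : realType) (k : nat) (F : 'I_k.+1 -> R) :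
  \sum_(j < k.+1) F j = \sum_(j < k) F (lift ord_max j) + F ord_max.
Proof.
rewrite big_ord_recr /=; congr (_ + _); apply: eq_bigr => j _; congr F.
by apply: val_inj; rewrite /= /bump leqNgt ltn_ord.
Qed.

Section Ext.
Context {R : realType} {m n : nat} (beta : R).
Implicit Types (c : instance R m n) (X : allocation m n).

Definition Dv c : R := beta * Ssum c + Ssum c + 1.

Definition ext c : instance R m.+1 n.+1 :=
  \matrix_(i, j) match unlift ord_max i, unlift ord_max j with
   | Some i', Some j' => c i' j'
   | Some i', None => n%:R * Dv c - \sum_(k < n) c i' k
   | None, Some _ => Dv c
   | None, None => 0 end.

Lemma ext_ll c i j : ext c (lift ord_max i) (lift ord_max j) = c i j.
Proof. by rewrite mxE !liftK. Qed.
Lemma ext_lm c i : ext c (lift ord_max i) ord_max = n%:R * Dv c - \sum_(k < n) c i k.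
Proof. by rewrite mxE liftK unlift_none. Qed.
Lemma ext_ml c j : ext c ord_max (lift ord_max j) = Dv c.
Proof. by rewrite mxE liftK unlift_none. Qed.
Lemma ext_mm c : ext c ord_max ord_max = 0.
Proof. by rewrite mxE !unlift_none. Qed.

Lemma cost_ext c i (S : {set 'I_n.+1}) : ord_max \notin S ->
  cost (ext c) (lift ord_max i) S = cost c i [set j | lift ord_max j \in S].
Proof.
move=> H; rewrite /cost big_mkcond sum_lift (negbTE H) addr0 [RHS]big_mkcond.
by apply: eq_bigr => j _; rewrite inE ext_ll.
Qed.

Hypothesis hb : 1 <= beta.
Hypothesis hn : (2 <= n)%N.

Lemma S_ge0 c : general c -> 0 <= Ssum c.
Proof. by move=> g; apply: sumr_ge0 => i _; apply: sumr_ge0 => j _; apply: g. Qed.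

Lemma Dv_big c i : general c -> Dv c <= n%:R * Dv c - \sum_(k < n) c i k.
Proof.
move=> g; have h1 := row_le_S c i g; have h0 := S_ge0 c g.
have h2 : (2:R) <= n%:R by rewrite ler_nat.
have hb0 : (0:R) <= beta by exact: le_trans ler01 hb.
have hbS : 0 <= beta * Ssum c by apply: mulr_ge0.
have hD : 0 <= Dv c by rewrite /Dv; lra.
have h3 : 2 * Dv c <= n%:R * Dv c by apply: ler_wpM2r.
move: h3; rewrite /Dv; set a := beta * Ssum c; set r := \sum_(k < n) c i k.
set N := n%:R * _.
have h1' : r <= Ssum c := h1. have h0' : 0 <= Ssum c := h0. have hbS' : 0 <= a := hbS.
clear -h1' h0' hbS'; lra.
Qed.

Lemma Dv_ge0 c : general c -> 0 <= Dv c.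
Proof.
move=> g; have h0 := S_ge0 c g.
have hb0 : (0:R) <= beta by exact: le_trans ler01 hb.
have hbS : 0 <= beta * Ssum c by apply: mulr_ge0.
rewrite /Dv; set a := beta * Ssum c.
have h0' : 0 <= Ssum c := h0. have hbS' : 0 <= a := hbS.
clear -h0' hbS'; lra.
Qed.

Lemma ext_general c : general c -> general (ext c).
Proof.
move=> g i j; rewrite mxE.
case: (unliftP ord_max i) => [i'|] _; case: (unliftP ord_max j) => [j'|] _ //=.
- exact: le_trans (Dv_ge0 c g) (Dv_big c i' g).
- exact: Dv_ge0 c g.
Qed.

Lemma ext_normalized c : general c -> normalized (ext c).
Proof.
move=> g; split; first exact: ext_general.
exists (n%:R * Dv c) => i; rewrite /cost (eq_bigl (fun _ => true)); last by move=> j; rewrite in_setT.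
rewrite sum_lift.
case: (unliftP ord_max i) => [i'|] ->.
- rewrite ext_lm (eq_bigr (fun j => c i' j)); last by move=> j _; rewrite ext_ll.
  by rewrite addrC subrK.
- rewrite ext_mm addr0 (eq_bigr (fun j => Dv c)); last by move=> j _; rewrite ext_ml.
  by rewrite sumr_const card_ord mulr_natl.
Qed.

Definition extX X : allocation m.+1 n.+1 :=
  [ffun i => match unlift ord_max i with
             | Some i' => [set lift ord_max j | j in X i']
             | None => [set ord_max] end].

Lemma extX_alloc X : is_allocation X -> is_allocation (extX X).
Proof.
move/alloc_P => [H1 H2]; apply/alloc_P; split.
- move=> i k j; rewrite !ffunE.
  case: (unliftP ord_max i) => [i'|] ->; case: (unliftP ord_max k) => [k'|] ->;
    rewrite ?liftK ?unlift_none /=.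
  + move=> ne /imsetP[a ha ->]; rewrite (mem_imset _ _ (@lift_inj _ ord_max)) => hb'.
    apply: (H1 i' k' a) => //; apply: contraNneq ne => ->; exact: eqxx.
  + move=> _ /imsetP[a _ ->]; rewrite inE => /eqP h.
    by move: (neq_lift (ord_max : 'I_n.+1) a); rewrite h eqxx.
  + move=> _; rewrite inE => /eqP -> /imsetP[a _ h].
    by move: (neq_lift (ord_max : 'I_n.+1) a); rewrite -h eqxx.
  + by rewrite eqxx.
- move=> j; case: (unliftP ord_max j) => [j'|] ->.
  + case: (H2 j') => i hi; exists (lift ord_max i); rewrite ffunE liftK /=.
    by rewrite (mem_imset _ _ (@lift_inj _ ord_max)).
  + by exists ord_max; rewrite ffunE unlift_none inE.
Qed.

Lemma extX_makespan c X : makespan (ext c) (extX X) <= makespan c X.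
Proof.
apply: makespan_le; first exact: makespan_ge0.
move=> i; rewrite ffunE; case: (unliftP ord_max i) => [i'|] ->;
  rewrite ?liftK ?unlift_none /=.
- rewrite /cost big_imset /=; last by move=> a b _ _; exact: lift_inj.
  rewrite (eq_bigr (fun j => c i' j)); last by move=> j _; rewrite ext_ll.
  exact: (makespan_ge c X i').
- by rewrite /cost big_set1 ext_mm; exact: makespan_ge0.
Qed.

Lemma makespan_le_S c X : general c -> makespan c X <= Ssum c.
Proof.
move=> g; apply: makespan_le; first exact: S_ge0.
by move=> i; exact: le_trans (cost_le_row c i (X i) g) (row_le_S c i g).
Qed.

Lemma OPT_ext c (i0 : 'I_m) : general c -> OPT (ext c) <= OPT c.
Proof.
move=> g; apply: (@le_bigmin _ R) => [|X hX].
- pose X0 : allocation m n := [ffun i => if i == i0 then setT else set0].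
  have hX0 : is_allocation X0.
    apply/alloc_P; split.
    + move=> i k j ne; rewrite !ffunE.
      case: (i =P i0) => [ei|_]; case: (k =P i0) => [ek|_]; rewrite ?inE //.
      by move: ne; rewrite ei ek eqxx.
    + by move=> j; exists i0; rewrite ffunE eqxx inE.
  apply: le_trans (OPT_le (ext c) (extX X0) (extX_alloc X0 hX0)) _.
  apply: le_trans (extX_makespan c X0) _.
  exact: makespan_le_S c X0 g.
- apply: le_trans (OPT_le (ext c) (extX X) (extX_alloc X hX)) _.
  exact: extX_makespan.
Qed.

Lemma key c (i0 : 'I_m) (Y : allocation m.+1 n.+1) : general c ->
  makespan (ext c) Y <= beta * OPT (ext c) ->
  [/\ makespan (ext c) Y <= beta * OPT c,
      forall i, ord_max \notin Y (lift ord_max i) &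
      forall j, lift ord_max j \notin Y ord_max].
Proof.
move=> g hY.
have hb0 : (0:R) <= beta by exact: le_trans ler01 hb.
have h1 : makespan (ext c) Y <= beta * OPT c :=
  le_trans hY (ler_wpM2l hb0 (OPT_ext c i0 g)).
have h2 : makespan (ext c) Y < Dv c.
  apply: le_lt_trans h1 _; apply: le_lt_trans (ler_wpM2l hb0 (OPT_le_S c)) _.
  have h0 : 0 <= Ssum c := S_ge0 c g.
  rewrite /Dv; set a := beta * Ssum c; clear -h0; lra.
split => //.
- move=> i; apply/negP => hin.
  have e1 := cost_ge_elem (ext c) (lift ord_max i) (Y (lift ord_max i)) ord_max
    (ext_general c g) hin.
  rewrite ext_lm in e1.
  have := le_lt_trans (le_trans (le_trans (Dv_big c i g) e1)
    (makespan_ge (ext c) Y (lift ord_max i))) h2.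
  by rewrite ltxx.
- move=> j; apply/negP => hin.
  have e1 := cost_ge_elem (ext c) ord_max (Y ord_max) (lift ord_max j)
    (ext_general c g) hin.
  rewrite ext_ml in e1.
  have := le_lt_trans (le_trans e1 (makespan_ge (ext c) Y ord_max)) h2.
  by rewrite ltxx.
Qed.

End Ext.

Theorem mainTheorem10 (R : realType) (alpha beta : R) (m n : nat) :
  0 < alpha -> alpha <= 1 -> 1 <= beta -> (2 <= m)%N -> (2 <= n)%N ->
  (exists (A : alloc_fun R m.+1 n.+1) (p : pay_fun R m.+1 n.+1),
      is_mechanism (@normalized R m.+1 n.+1) A /\
      envy_free alpha (@normalized R m.+1 n.+1) A p /\
      beta_approx beta (@normalized R m.+1 n.+1) A) ->
  exists (A : alloc_fun R m n) (p : pay_fun R m n),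
      is_mechanism (@general R m n) A /\
      envy_free alpha (@general R m n) A p /\
      beta_approx beta (@general R m n) A.
Proof.
move=> ha0 ha1 hb hm hn [A' [p' [hA [hef hba]]]].
have i0 : 'I_m := Ordinal (leq_trans (isT : (0 < 2)%N) hm).
pose E c := @ext R m n beta c.
exists (fun c => [ffun i => [set j | lift ord_max j \in A' (E c) (lift ord_max i)]]).
exists (fun c i => p' (E c) (lift ord_max i)).
have K c : general c -> [/\ is_allocation (A' (E c)),
    makespan (E c) (A' (E c)) <= beta * OPT c,
    forall i, ord_max \notin A' (E c) (lift ord_max i) &
    forall j, lift ord_max j \notin A' (E c) ord_max].
  move=> g; have hN := ext_normalized beta hb hn c g.
  have [h1 h2 h3] := key beta hb hn c i0 (A' (E c)) g (hba _ hN).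
  by split => //; apply: hA.
split; [|split].
- move=> c g; have [hX _ _ h3] := K c g.
  move/alloc_P: hX => [H1 H2]; apply/alloc_P; split.
  + move=> i k j ne; rewrite !ffunE !inE => a b.
    apply: (H1 (lift ord_max i) (lift ord_max k) (lift ord_max j)) => //.
    by rewrite (inj_eq (@lift_inj _ ord_max)).
  + move=> j; case: (H2 (lift ord_max j)) => k hk.
    case: (unliftP ord_max k) hk => [k'|] -> hk.
    * by exists k'; rewrite ffunE inE.
    * by move: (h3 j); rewrite hk.
- move=> c g i k; have [hX _ h2 _] := K c g; rewrite !ffunE.
  rewrite -!(cost_ext beta) //.
  exact: (hef (E c) (ext_normalized beta hb hn c g)).
- move=> c g; have [hX h1 h2 _] := K c g.
  apply: makespan_le.
    apply: mulr_ge0; [exact: le_trans ler01 hb | exact: OPT_ge0].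
  move=> i; rewrite ffunE -(cost_ext beta) //.
  exact: le_trans (makespan_ge _ _ _) h1.
Qed.
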